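(* Let $\omega>\gamma^2/4$. There exists $\eta>0$ (small) such that for $\alpha=0,1$, $\|Q_{\omega,\gamma}^{-1}e^{\eta|x|}\partial_x^\alpha\mathcal{Y}_\pm\|_{L^\infty(\mathbb{R}\setminus\{0\})}<\infty$.
   Context: Fix $\gamma<0$, $p>5$, $\omega>\gamma^2/4$, and $Q_{\omega,\gamma}(x)=\big[\tfrac{(p+1)\omega}{2}\operatorname{sech}^2\big(\tfrac{(p-1)\sqrt\omega}{2}|x|+\tanh^{-1}(\tfrac{\gamma}{2\sqrt\omega})\big)\big]^{1/(p-1)}$ (positive, decaying like $e^{-\sqrt\omega|x|}$). Let $\mathcal D_{\mathrm{even}}=\{f\in H^1(\mathbb{R})\cap H^2(\mathbb{R}\setminus\{0\})\text{ even}: f'(0+)-f'(0-)=-\gamma f(0)\}$, and on real functions in $\mathcal D_{\mathrm{even}}$ let $L^-f=-f''+\omega f-Q_{\omega,\gamma}^{p-1}f$, $L^+f=-f''+\omega f-pQ_{\omega,\gamma}^{p-1}f$. For $f=f_1+if_2$ set $\mathcal{L}f=-L^-f_2+iL^+f_1$. $\mathcal{Y}_+=\mathcal Y_1+i\mathcal Y_2$ ($\mathcal Y_j\in\mathcal D_{\mathrm{even}}$ real) is the eigenfunction of $\mathcal L$ for its simple positive eigenvalue $e_\omega>0$ on even functions, i.e. $L^+\mathcal{Y}_1=e_\omega\mathcal{Y}_2$, $L^-\mathcal{Y}_2=-e_\omega\mathcal{Y}_1$; $\mathcal Y_-=\overline{\mathcal Y_+}$. The derivative $\partial_x\mathcal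 Y_\pm$ is taken on $\mathbb{R}\setminus\{0\}$. *)

(* Defs.v *)
From Stdlib Require Import Reals.
From Coquelicot Require Import Coquelicot.
Open Scope R_scope.

Definition atanh (y : R) : R := ln ((1 + y) / (1 - y)) / 2.

Definition sech (y : R) : R := / cosh y.

Definition Qwg (p omega gamma : R) (x : R) : R :=
  Rpower ((p + 1) * omega / 2 *
          (sech ((p - 1) * sqrt omega / 2 * Rabs x + atanh (gamma / (2 * sqrt omega)))) ^ 2)
         (1 / (p - 1)).

Definition D2 (f : R -> R) (x : R) : R := Derive (Derive f) x.

Definition L2R (g : R -> R) : Prop :=
  ex_RInt_gen (fun x => g x ^ 2) (Rbar_locally m_infty) (at_point 0) /\
  ex_RInt_gen (fun x => g x ^ 2) (at_point 0) (Rbar_locally p_infty).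

(* D_even: even functions in H^1(R) ∩ H^2(R\{0}) with
   f'(0+) - f'(0-) = - gamma f(0).  Regularity is taken classically:
   f continuous at 0, twice differentiable on R\{0}, f, f', f'' in L^2,
   and the one-sided limits f'(0±) exist. *)
Definition D_even (gamma : R) (f : R -> R) : Prop :=
  (forall x, f (- x) = f x) /\
  continuous f 0 /\
  (forall x, x <> 0 -> ex_derive f x /\ ex_derive (Derive f) x) /\
  L2R f /\ L2R (Derive f) /\ L2R (D2 f) /\
  exists dp dm : R,
    filterlim (Derive f) (at_right 0) (locally dp) /\
    filterlim (Derive f) (at_left 0) (locally dm) /\
    dp - dm = - gamma * f 0.

Definition Lminus (p omega gamma : R) (f : R -> R) (x : R) : R :=
  - D2 f x + omega * f x - Rpower (Qwg p omega gamma x) (p - 1) * f x.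

Definition Lplus (p omega gamma : R) (f : R -> R) (x : R) : R :=
  - D2 f x + omega * f x - p * Rpower (Qwg p omega gamma x) (p - 1) * f x.

Definition weighted_bounded (p omega gamma eta : R) (g : R -> R) : Prop :=
  exists C : R, forall x : R, x <> 0 ->
    Rabs (exp (eta * Rabs x) * g x / Qwg p omega gamma x) <= C.

(* Main.v *)
Require Import Defs.
From Stdlib Require Import Reals Lra Psatz Classical.
From Coquelicot Require Import Coquelicot.
Open Scope R_scope.

Lemma gen_bound (g : R -> R) :
  (forall x, 0 <= g x) ->
  ex_RInt_gen g (at_point 0) (Rbar_locally p_infty) ->
  exists S, forall x y, 0 <= x <= y -> ex_RInt g x y /\ RInt g x y <= S.
Proof.
  intros Hpos [l Hl].
  assert (H := Hl (ball l 1) (locally_ball l (mkposreal 1 Rlt_0_1))).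
  destruct H as [Q Rf HQ HR HQR].
  unfold at_point in HQ. destruct HR as [M HM].
  exists (Rabs l + 1).
  intros x y Hxy.
  set (Y := Rmax y (M + 1)).
  assert (HY : M < Y) by (unfold Y; generalize (Rmax_r y (M+1)); lra).
  destruct (HQR 0 Y HQ (HM Y HY)) as [v [Hv Hb]]. simpl in Hv.
  assert (Hy : y <= Y) by apply Rmax_l.
  assert (E0Y : ex_RInt g 0 Y) by (exists v; exact Hv).
  assert (E0y : ex_RInt g 0 y) by (apply (ex_RInt_Chasles_1 g 0 y Y); [lra|auto]).
  assert (EyY : ex_RInt g y Y) by (apply (ex_RInt_Chasles_2 g 0 y Y); [lra|auto]).
  assert (E0x : ex_RInt g 0 x) by (apply (ex_RInt_Chasles_1 g 0 x y); [lra|auto]).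
  assert (Exy : ex_RInt g x y) by (apply (ex_RInt_Chasles_2 g 0 x y); [lra|auto]).
  split; auto.
  assert (C1 := RInt_Chasles g 0 x y E0x Exy).
  assert (C2 := RInt_Chasles g 0 y Y E0y EyY).
  assert (P1 := RInt_ge_0 g 0 x ltac:(lra) E0x (fun t _ => Hpos t)).
  assert (P2 := RInt_ge_0 g y Y ltac:(lra) EyY (fun t _ => Hpos t)).
  rewrite (is_RInt_unique g 0 Y v Hv) in C2.
  unfold plus in C1, C2; simpl in C1, C2.
  unfold ball in Hb; simpl in Hb; unfold AbsRing_ball, abs, minus, plus, opp in Hb; simpl in Hb.
  assert (v <= Rabs l + 1).
  { generalize (Rabs_def2 _ _ Hb) (Rle_abs l). lra. }
  lra.
Qed.

Lemma small_point (h : R -> R) a b S :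
  a < b -> ex_RInt h a b -> RInt h a b <= S ->
  exists y, a <= y <= b /\ h y <= (S + 1) / (b - a).
Proof.
  intros Hab Ex Hle.
  apply NNPP; intro Hn.
  assert (Hall : forall y, a <= y <= b -> (S+1)/(b-a) < h y).
  { intros y Hy. apply Rnot_le_lt. intro Hc. apply Hn. exists y. auto. }
  assert (H := RInt_le (fun _ => (S+1)/(b-a)) h a b ltac:(lra)
       (ex_RInt_const _ _ _) Ex (fun t Ht => Rlt_le _ _ (Hall t ltac:(lra)))).
  rewrite RInt_const in H. unfold scal in H; simpl in H; unfold mult in H; simpl in H.
  replace ((b - a) * ((S + 1) / (b - a))) with (S+1) in H by (field; lra).
  lra.
Qed.

Definition IB (g : R -> R) := exists S, forall x y, 0 <= x <= y -> ex_RInt g x y /\ RInt g x y <= S.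

Lemma IB_plus g1 g2 : IB g1 -> IB g2 -> IB (fun t => g1 t + g2 t).
Proof.
  intros [S1 H1] [S2 H2]. exists (S1 + S2). intros x y Hxy.
  destruct (H1 x y Hxy) as [E1 B1]. destruct (H2 x y Hxy) as [E2 B2].
  split.
  - apply (ex_RInt_plus g1 g2 x y E1 E2).
  - generalize (RInt_plus g1 g2 x y E1 E2). unfold plus; simpl. intro E; rewrite E. lra.
Qed.

Lemma L2_IB f : L2R f -> IB (fun t => f t ^ 2).
Proof.
  intros [_ H]. apply gen_bound; auto. intro; apply pow2_ge_0.
Qed.

Lemma bounded_f (f : R -> R) :
  (forall x, x <> 0 -> ex_derive f x /\ ex_derive (Derive f) x) ->
  L2R f -> L2R (Derive f) -> exists B, forall x, 0 < x -> f x ^ 2 <= B.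
Proof.
  intros Hd Hf Hf'.
  destruct (IB_plus _ _ (L2_IB f Hf) (L2_IB _ Hf')) as [S HS].
  exists ((S + 1) + S). intros x Hx.
  destruct (HS x (x+1) ltac:(lra)) as [E1 B1].
  destruct (small_point _ x (x+1) S ltac:(lra) E1 B1) as [y [Hy Hsy]].
  replace (x + 1 - x) with 1 in Hsy by ring.
  rewrite Rdiv_1_r in Hsy.
  destruct (HS x y ltac:(lra)) as [E2 B2].
  assert (Hfs : forall t, x <= t <= y -> is_derive (fun t => f t ^ 2) t (2 * f t * Derive f t)).
  { intros t Ht. destruct (Hd t ltac:(lra)) as [D1 _].
    auto_derive; [exact D1|]. change (Derive (fun x0 => f x0) t) with (Derive f t). lra. }
  assert (Hc : forall t, x <= t <= y -> continuous (fun t => 2 * f t * Derive f t) t).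
  { intros t Ht. destruct (Hd t ltac:(lra)) as [D1 D2].
    apply (@ex_derive_continuous R_AbsRing R_NormedModule). auto_derive; auto. }
  assert (HI := is_RInt_derive (fun t => f t ^ 2) (fun t => 2 * f t * Derive f t) x y
     (fun t Ht => Hfs t ltac:(rewrite Rmin_left in Ht by lra; rewrite Rmax_right in Ht by lra; lra))
     (fun t Ht => Hc t ltac:(rewrite Rmin_left in Ht by lra; rewrite Rmax_right in Ht by lra; lra))).
  assert (Hle : RInt (fun t => - (f t ^ 2 + Derive f t ^ 2)) x y <= RInt (fun t => 2 * f t * Derive f t) x y).
  { apply RInt_le. lra. apply (ex_RInt_opp (fun t => f t ^ 2 + Derive f t ^ 2)); exact E2.
    exists (minus (f y ^ 2) (f x ^ 2)); exact HI.
    intros t _. assert (HH := pow2_ge_0 (f t + Derive f t)). ring_simplify in HH. ring_simplify. lra. }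
  rewrite (is_RInt_unique _ _ _ _ HI) in Hle.
  assert (Ho : RInt (fun t => - (f t ^ 2 + Derive f t ^ 2)) x y = - RInt (fun t => f t ^ 2 + Derive f t ^ 2) x y)
    by exact (RInt_opp (fun t => f t ^ 2 + Derive f t ^ 2) _ _ E2).
  rewrite Ho in Hle.
  change (minus (f y ^ 2) (f x ^ 2)) with (f y ^ 2 - f x ^ 2) in Hle.
  assert (0 <= Derive f y ^ 2) by apply pow2_ge_0.
  lra.
Qed.

Lemma incr_deriv (phi dphi : R -> R) x X : x <= X ->
  (forall t, x <= t <= X -> is_derive phi t (dphi t)) ->
  (forall t, x <= t <= X -> 0 <= dphi t) -> phi x <= phi X.
Proof.
  intros Hx Hd Hp.
  destruct (MVT_gen phi x X dphi) as [c [Hc E]].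
  - intros t Ht. rewrite Rmin_left in Ht by lra. rewrite Rmax_right in Ht by lra. apply Hd; lra.
  - intros t Ht. rewrite Rmin_left in Ht by lra. rewrite Rmax_right in Ht by lra.
    apply continuity_pt_filterlim.
    apply (@ex_derive_continuous R_AbsRing R_NormedModule). eexists. apply Hd; lra.
  - rewrite Rmin_left in Hc by lra. rewrite Rmax_right in Hc by lra.
    assert (0 <= dphi c * (X - x)) by (apply Rmult_le_pos; [apply Hp; lra | lra]). lra.
Qed.

Lemma IB_small h : (forall t, 0 <= h t) -> IB h -> forall x eps, 0 < x -> 0 < eps ->
  exists X, x <= X /\ h X <= eps.
Proof.
  intros Hpos [S HS] x eps Hx He.
  assert (HS0 : 0 <= S).
  { destruct (HS x x ltac:(lra)) as [_ B]. rewrite RInt_point in B. exact B. }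
  set (L := (S + 1) / eps).
  assert (HL : 0 < L) by (unfold L; apply Rdiv_lt_0_compat; lra).
  destruct (HS x (x + L) ltac:(lra)) as [E B].
  destruct (small_point h x (x+L) S ltac:(lra) E B) as [y [Hy Hh]].
  exists y. split. lra.
  replace ((S + 1) / (x + L - x)) with eps in Hh. exact Hh.
  replace (x + L - x) with L by ring. unfold L. field. lra.
Qed.

Lemma exp_le' x y : x <= y -> exp x <= exp y.
Proof. intros [H|H]. apply Rlt_le, exp_increasing, H. subst; lra. Qed.
Lemma ln_le' x y : 0 < x -> x <= y -> ln x <= ln y.
Proof. intros Hx [H|H]. apply Rlt_le, ln_increasing; auto. subst; lra. Qed.

Lemma cosh_pos y : 0 < cosh y.
Proof. unfold cosh. generalize (exp_pos y) (exp_pos (-y)). lra. Qed.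

Lemma cosh_ge y : exp y / 2 <= cosh y.
Proof. unfold cosh. generalize (exp_pos (-y)). lra. Qed.

Lemma cosh_le y : cosh y <= exp (Rabs y).
Proof. unfold cosh. destruct (Rle_or_lt 0 y).
  - rewrite Rabs_right by lra. assert (exp (-y) <= exp y) by (apply exp_le'; lra). lra.
  - rewrite Rabs_left by lra. assert (exp y <= exp (-y)) by (apply exp_le'; lra). lra.
Qed.

Lemma pc p omega : 1 < p -> 0 < omega -> 0 < (p + 1) * omega / 2.
Proof. intros. assert (0 < (p+1)*omega) by (apply Rmult_lt_0_compat; lra). lra. Qed.

Lemma V_eq p omega gamma x : 1 < p -> 0 < omega ->
  Rpower (Qwg p omega gamma x) (p - 1) =
  (p + 1) * omega / 2 * (sech ((p - 1) * sqrt omega / 2 * Rabs x + atanh (gamma / (2 * sqrt omega)))) ^ 2.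
Proof.
  intros Hp Ho. unfold Qwg. rewrite Rpower_mult.
  replace (1 / (p - 1) * (p - 1)) with 1 by (field; lra).
  apply Rpower_1. apply Rmult_lt_0_compat. apply pc; auto.
  unfold sech. generalize (cosh_pos ((p - 1) * sqrt omega / 2 * Rabs x + atanh (gamma / (2 * sqrt omega)))). intro.
  apply pow_lt. apply Rinv_0_lt_compat. lra.
Qed.

Lemma V_bound p omega gamma : 1 < p -> 0 < omega ->
  exists CV, 0 < CV /\ forall x, 0 < x ->
    0 <= Rpower (Qwg p omega gamma x) (p - 1) <= CV * exp (- ((p - 1) * sqrt omega) * x).
Proof.
  intros Hp Ho. set (b := atanh (gamma / (2 * sqrt omega))).
  set (a := (p - 1) * sqrt omega / 2).
  exists ((p + 1) * omega / 2 * 4 * exp (-2 * b)). split.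
  { generalize (exp_pos (-2*b)). intro. apply Rmult_lt_0_compat; [|auto]. generalize (pc p omega Hp Ho); lra. }
  intros x Hx. rewrite V_eq by auto. fold b. fold a.
  rewrite Rabs_right by lra.
  set (y := a * x + b). unfold sech.
  assert (Hc := cosh_ge y). assert (Hc0 := cosh_pos y). assert (He := exp_pos y).
  assert (Hs : (/ cosh y) ^ 2 <= 4 * exp (-2 * y)).
  { replace (-2*y) with (-y + -y) by ring. rewrite exp_plus, exp_Ropp.
    rewrite <- Rinv_pow by lra. replace (4 * (/ exp y * / exp y)) with (/ ((exp y / 2)^2)) by (field; lra).
    apply Rinv_le_contravar. apply pow_lt; lra. apply pow_incr; lra. }
  assert (Hy : exp (-2 * y) = exp (-2*b) * exp (- ((p - 1) * sqrt omega) * x)).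
  { rewrite <- exp_plus. f_equal. unfold y, a. field. }
  split.
  - apply Rmult_le_pos. generalize (pc p omega Hp Ho); lra. apply pow2_ge_0.
  - rewrite Hy in Hs. generalize (pc p omega Hp Ho); intro.
    apply Rmult_le_compat_l with (r := (p + 1) * omega / 2) in Hs; [|lra]. lra.
Qed.

Lemma Q_lower p omega gamma : 1 < p -> 0 < omega ->
  exists cQ, 0 < cQ /\ forall x, cQ * exp (- sqrt omega * Rabs x) <= Qwg p omega gamma x.
Proof.
  intros Hp Ho. set (b := atanh (gamma / (2 * sqrt omega))).
  set (a := (p - 1) * sqrt omega / 2).
  set (c0 := (p + 1) * omega / 2 * exp (-2 * Rabs b)).
  assert (Hc0 : 0 < c0) by (unfold c0; generalize (exp_pos (-2 * Rabs b)); intro; apply Rmult_lt_0_compat; auto; apply pc; auto).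
  exists (exp (1 / (p - 1) * ln c0)). split. apply exp_pos.
  intros x. unfold Qwg. fold b. fold a. unfold Rpower.
  rewrite <- exp_plus. apply exp_le'.
  set (y := a * Rabs x + b).
  assert (Hsa : 0 < sqrt omega) by (apply sqrt_lt_R0; auto).
  assert (Ha : 0 <= a) by (unfold a; nra).
  assert (Hyl : Rabs y <= a * Rabs x + Rabs b).
  { unfold y. eapply Rle_trans. apply Rabs_triang. rewrite Rabs_mult, (Rabs_right a) by lra.
    rewrite Rabs_Rabsolu. lra. }
  assert (Hs : exp (-2 * Rabs b) * exp (- ((p-1) * sqrt omega) * Rabs x) <= (sech y) ^ 2).
  { rewrite <- exp_plus. unfold sech.
    assert (Hc := cosh_le y). assert (Hc0' := cosh_pos y).
    apply Rle_trans with (exp (-2 * Rabs y)).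
    apply exp_le'. unfold a in Hyl. nra.
    replace (-2 * Rabs y) with (- Rabs y + - Rabs y) by ring. rewrite exp_plus, exp_Ropp.
    rewrite <- Rinv_pow by lra. replace (/ exp (Rabs y) * / exp (Rabs y)) with (/ (exp (Rabs y) ^ 2)).
    apply Rinv_le_contravar. apply pow_lt; lra. apply pow_incr; lra.
    field. generalize (exp_pos (Rabs y)); lra. }
  assert (HA : c0 * exp (- ((p-1) * sqrt omega) * Rabs x) <= (p + 1) * omega / 2 * sech y ^ 2).
  { unfold c0. rewrite Rmult_assoc. apply Rmult_le_compat_l. generalize (pc p omega Hp Ho); lra. exact Hs. }
  apply ln_le' in HA. 2: { apply Rmult_lt_0_compat; auto. apply exp_pos. }
  rewrite ln_mult, ln_exp in HA by (auto; apply exp_pos).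
  assert (Hr : 0 < 1 / (p - 1)) by (apply Rdiv_lt_0_compat; lra).
  apply Rmult_le_compat_l with (r := 1 / (p - 1)) in HA; [|lra].
  replace (1 / (p - 1) * (ln c0 + - ((p - 1) * sqrt omega) * Rabs x)) with
    (1 / (p - 1) * ln c0 + - sqrt omega * Rabs x) in HA by (field; lra).
  exact HA.
Qed.

Lemma young k u v : 0 < k -> 2 * u * v <= k * u ^ 2 + v ^ 2 / k.
Proof.
  intros Hk. assert (H := pow2_ge_0 (k * u - v)).
  assert (E : k * u ^ 2 + v ^ 2 / k - 2 * u * v = (k * u - v) ^ 2 / k) by (field; lra).
  assert (0 <= (k * u - v) ^ 2 / k) by (apply Rmult_le_pos; [auto | left; apply Rinv_0_lt_compat; auto]).
  lra.
Qed.

Lemma exp_sq m t : exp (- m * t) ^ 2 = exp (- (2 * m) * t).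
Proof. simpl. rewrite Rmult_1_r, <- exp_plus. f_equal; ring. Qed.

Lemma le_eps a b : (forall eps, 0 < eps -> a <= b + eps) -> a <= b.
Proof. intros H. apply Rnot_lt_le. intro Hc. specialize (H ((a - b)/2) ltac:(lra)). lra. Qed.

Lemma sq3 u v w : (u + v + w) ^ 2 <= 3 * (u ^ 2 + v ^ 2 + w ^ 2).
Proof.
  assert (H1 := pow2_ge_0 (u - v)). assert (H2 := pow2_ge_0 (v - w)). assert (H3 := pow2_ge_0 (u - w)).
  assert (E : 3 * (u ^ 2 + v ^ 2 + w ^ 2) - (u + v + w) ^ 2 = (u - v) ^ 2 + (v - w) ^ 2 + (u - w) ^ 2) by ring.
  lra.
Qed.

Section Core.
Variables (a c V : R -> R) (p k l m CV B mu : R).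
Hypotheses (Hk : 0 < k) (Hp : 1 < p) (Hm : 0 < m) (HCV : 0 <= CV)
  (Hmu0 : 0 < mu) (Hmuk : mu < k) (Hmum : mu < m)
  (Hda : forall t, 0 < t -> ex_derive a t /\ ex_derive (Derive a) t)
  (Hdc : forall t, 0 < t -> ex_derive c t /\ ex_derive (Derive c) t)
  (Ea : forall t, 0 < t -> Derive (Derive a) t = (k^2 - l^2) * a t - (- 2 * k * l) * c t - p * V t * a t)
  (Ec : forall t, 0 < t -> Derive (Derive c) t = (k^2 - l^2) * c t + (- 2 * k * l) * a t - V t * c t)
  (HV : forall t, 0 < t -> 0 <= V t <= CV * exp (- m * t))
  (HB : forall t, 0 < t -> a t ^ 2 + c t ^ 2 <= B)
  (Hsmall : forall x eps, 0 < x -> 0 < eps -> exists X, x <= X /\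
      a X ^ 2 + c X ^ 2 + Derive a X ^ 2 + Derive c X ^ 2 <= eps).

Let w1 t := Derive a t + k * a t + l * c t.
Let w2 t := Derive c t + k * c t - l * a t.
Let N t := w1 t ^ 2 + w2 t ^ 2.

Lemma N_deriv t : 0 < t -> is_derive N t
  (2 * k * N t - 2 * p * V t * a t * w1 t - 2 * V t * c t * w2 t).
Proof.
  intros Ht. destruct (Hda t Ht) as [A1 A2]. destruct (Hdc t Ht) as [C1 C2].
  unfold N, w1, w2. auto_derive.
  - repeat split; auto.
  - change (Derive (fun x => a x) t) with (Derive a t).
    change (Derive (fun x => c x) t) with (Derive c t).
    change (Derive (fun x => Derive a x) t) with (Derive (Derive a) t).
    change (Derive (fun x => Derive c x) t) with (Derive (Derive c) t).
    rewrite (Ea t Ht), (Ec t Ht). ring.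
Qed.


Lemma B_nonneg : 0 <= B.
Proof. assert (H := HB 1 ltac:(lra)). generalize (pow2_ge_0 (a 1)) (pow2_ge_0 (c 1)). lra. Qed.

Lemma N_le_h X : N X <= 3 * (1 + k ^ 2 + l ^ 2) * (a X ^ 2 + c X ^ 2 + Derive a X ^ 2 + Derive c X ^ 2).
Proof.
  unfold N, w1, w2.
  assert (H1 := sq3 (Derive a X) (k * a X) (l * c X)).
  assert (H2 := sq3 (Derive c X) (k * c X) (- l * a X)).
  replace (Derive c X + k * c X - l * a X) with (Derive c X + k * c X + - l * a X) by ring.
  assert (E : 3 * (1 + k ^ 2 + l ^ 2) * (a X ^ 2 + c X ^ 2 + Derive a X ^ 2 + Derive c X ^ 2)
    - (3 * (Derive a X ^ 2 + (k * a X) ^ 2 + (l * c X) ^ 2) + 3 * (Derive c X ^ 2 + (k * c X) ^ 2 + (- l * a X) ^ 2))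
    = 3 * (a X ^ 2 + c X ^ 2) + 3 * (l ^ 2 * (a X ^ 2 + c X ^ 2)) + 3 * (k ^ 2 * (a X ^ 2 + c X ^ 2))
      - 3 * (k^2 * (a X ^ 2 + c X ^ 2)) - 3 * (l ^ 2 * (c X ^ 2 + a X ^ 2)) + 3 * (Derive a X ^ 2 + Derive c X ^ 2) * (k^2 + l^2)) by ring.
  assert (0 <= a X ^ 2 + c X ^ 2) by (generalize (pow2_ge_0 (a X)) (pow2_ge_0 (c X)); lra).
  assert (0 <= (Derive a X ^ 2 + Derive c X ^ 2) * (k^2 + l^2)).
  { apply Rmult_le_pos; generalize (pow2_ge_0 (Derive a X)) (pow2_ge_0 (Derive c X)) (pow2_ge_0 k) (pow2_ge_0 l); lra. }
  lra.
Qed.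

Lemma N_bound : exists K1, 0 <= K1 /\ forall x, 0 < x -> N x <= K1 * exp (- (2 * m) * x).
Proof.
  set (K1 := p ^ 2 * CV ^ 2 * B / k / (k + 2 * m)).
  assert (HB0 := B_nonneg).
  assert (HK1 : 0 <= K1).
  { unfold K1. apply Rmult_le_pos; [apply Rmult_le_pos|left; apply Rinv_0_lt_compat; lra].
    apply Rmult_le_pos; [apply Rmult_le_pos; apply pow2_ge_0|auto]. left; apply Rinv_0_lt_compat; lra. }
  exists K1. split; auto. intros x Hx.
  set (phi := fun t => exp (- k * t) * N t - K1 * exp (- (k + 2 * m) * t)).
  assert (Hphi : forall X, x <= X -> phi x <= phi X).
  { intros X HxX.
    apply (incr_deriv phi (fun t => - k * exp (- k * t) * N t + exp (- k * t) *
        (2 * k * N t - 2 * p * V t * a t * w1 t - 2 * V t * c t * w2 t)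
        + K1 * (k + 2 * m) * exp (- (k + 2 * m) * t))); auto.
    - intros t Ht. unfold phi.
      assert (Ht0 : 0 < t) by lra.
      assert (HN := N_deriv t Ht0).
      auto_derive. exists (2 * k * N t - 2 * p * V t * a t * w1 t - 2 * V t * c t * w2 t); exact HN.
      change (Derive (fun x0 => N x0) t) with (Derive N t). rewrite (is_derive_unique N t _ HN). ring.
    - intros t Ht. assert (Ht0 : 0 < t) by lra.
      destruct (HV t Ht0) as [V0 V1].
      assert (Y1 := young k (w1 t) (p * V t * a t) Hk).
      assert (Y2 := young k (w2 t) (V t * c t) Hk).
      assert (HBt := HB t Ht0).
      assert (Hsq : V t ^ 2 <= CV ^ 2 * exp (- (2 * m) * t)).
      { rewrite <- exp_sq. rewrite <- Rpow_mult_distr. apply pow_incr. lra. }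
      assert (Hp2 : (V t * c t) ^ 2 <= p ^ 2 * V t ^ 2 * c t ^ 2).
      { rewrite Rpow_mult_distr. assert (0 <= V t ^ 2 * c t ^ 2) by (apply Rmult_le_pos; apply pow2_ge_0).
        assert (1 <= p ^ 2) by (simpl; nra). nra. }
      assert (Hsum : (p * V t * a t) ^ 2 + (V t * c t) ^ 2 <= p ^ 2 * CV ^ 2 * exp (- (2 * m) * t) * B).
      { assert (E : (p * V t * a t) ^ 2 = p ^ 2 * V t ^ 2 * a t ^ 2) by ring.
        assert (0 <= p ^ 2 * V t ^ 2) by (apply Rmult_le_pos; apply pow2_ge_0).
        assert (p ^ 2 * V t ^ 2 * (a t ^ 2 + c t ^ 2) <= p ^ 2 * V t ^ 2 * B) by (apply Rmult_le_compat_l; auto).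
        assert (p ^ 2 * V t ^ 2 * B <= p ^ 2 * (CV ^ 2 * exp (- (2 * m) * t)) * B).
        { apply Rmult_le_compat_r; auto. apply Rmult_le_compat_l; auto. apply pow2_ge_0. }
        lra. }
      assert (Hlow : - (p ^ 2 * CV ^ 2 * exp (- (2 * m) * t) * B) / k <=
        k * N t - 2 * p * V t * a t * w1 t - 2 * V t * c t * w2 t).
      { unfold N. unfold Rdiv in *.
        assert (((p * V t * a t) ^ 2 + (V t * c t) ^ 2) * / k <= p ^ 2 * CV ^ 2 * exp (- (2 * m) * t) * B * / k).
        { apply Rmult_le_compat_r; auto. left; apply Rinv_0_lt_compat; auto. }
        lra. }
      assert (Ee : exp (- k * t) * exp (- (2 * m) * t) = exp (- (k + 2 * m) * t)).
      { rewrite <- exp_plus. f_equal. ring. }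
      assert (Hek := exp_pos (- k * t)).
      apply Rmult_le_compat_l with (r := exp (- k * t)) in Hlow; [|lra].
      assert (Ef : exp (- k * t) * (- (p ^ 2 * CV ^ 2 * exp (- (2 * m) * t) * B) / k)
                  = - K1 * (k + 2 * m) * exp (- (k + 2 * m) * t)).
      { rewrite <- Ee. unfold K1. field. lra. }
      rewrite Ef in Hlow. lra. }
  apply le_eps. intros eps Heps.
  set (Kc := 3 * (1 + k ^ 2 + l ^ 2)).
  assert (HKc : 0 < Kc) by (unfold Kc; generalize (pow2_ge_0 k) (pow2_ge_0 l); lra).
  destruct (Hsmall x (eps / Kc) Hx ltac:(apply Rdiv_lt_0_compat; lra)) as [X [HxX HX]].
  assert (HNX : N X <= eps).
  { eapply Rle_trans. apply N_le_h. fold Kc.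
    apply Rmult_le_compat_l with (r := Kc) in HX; [|lra].
    replace (Kc * (eps / Kc)) with eps in HX by (field; lra). exact HX. }
  assert (H := Hphi X HxX). unfold phi in H.
  assert (HN0 : 0 <= N X) by (unfold N; generalize (pow2_ge_0 (w1 X)) (pow2_ge_0 (w2 X)); lra).
  assert (Hek : exp (- k * X) <= exp (- k * x)) by (apply exp_le'; nra).
  assert (Hpos := exp_pos (- k * x)).
  assert (HE2 := exp_pos (- (k + 2 * m) * X)).
  assert (Ee : exp (- k * x) * exp (- (2 * m) * x) = exp (- (k + 2 * m) * x)).
  { rewrite <- exp_plus. f_equal. ring. }
  assert (exp (- k * X) * N X <= exp (- k * x) * N X) by (apply Rmult_le_compat_r; auto).
  assert (Hfin : exp (- k * x) * N x <= exp (- k * x) * (N X + K1 * exp (- (2 * m) * x))).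
  { rewrite Rmult_plus_distr_l. rewrite <- Rmult_assoc, (Rmult_comm _ K1), Rmult_assoc, Ee.
    assert (0 <= K1 * exp (- (k + 2 * m) * X)) by (apply Rmult_le_pos; lra). lra. }
  apply Rmult_le_reg_l in Hfin; auto. lra.
Qed.

Lemma rho_bound : exists R0, 0 <= R0 /\ forall x, 0 < x -> a x ^ 2 + c x ^ 2 <= R0 * exp (- (2 * mu) * x).
Proof.
  destruct N_bound as [K1 [HK1 HN]].
  set (d := 2 * (k - mu)).
  assert (Hd : 0 < d) by (unfold d; lra).
  set (K2 := K1 / d / (2 * m - 2 * mu)).
  set (rho := fun t => a t ^ 2 + c t ^ 2).
  set (psi := fun t => exp (2 * mu * t) * rho t + K2 * exp (- (2 * m - 2 * mu) * t)).
  assert (Hpsi : forall x, 1 <= x -> psi x <= psi 1).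
  { intros x Hx.
    assert (H := incr_deriv (fun t => - psi t) (fun t => - (2 * mu * exp (2 * mu * t) * rho t
        + exp (2 * mu * t) * (2 * a t * Derive a t + 2 * c t * Derive c t)
        - K2 * (2 * m - 2 * mu) * exp (- (2 * m - 2 * mu) * t))) 1 x Hx).
    cut (- psi 1 <= - psi x). lra. apply H.
    - intros t Ht. destruct (Hda t ltac:(lra)) as [A1 _]. destruct (Hdc t ltac:(lra)) as [C1 _].
      unfold psi, rho. auto_derive. repeat split; auto.
      change (Derive (fun x0 => a x0) t) with (Derive a t).
      change (Derive (fun x0 => c x0) t) with (Derive c t). ring.
    - intros t Ht. assert (Ht0 : 0 < t) by lra.
      assert (HNt := HN t Ht0).
      assert (Ya := young d (a t) (w1 t) Hd).
      assert (Yc := young d (c t) (w2 t) Hd).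
      assert (Eid : 2 * a t * Derive a t + 2 * c t * Derive c t
                    = - 2 * k * rho t + 2 * a t * w1 t + 2 * c t * w2 t).
      { unfold rho, w1, w2. ring. }
      assert (Hr : 2 * a t * Derive a t + 2 * c t * Derive c t <= - 2 * mu * rho t + K1 / d * exp (- (2 * m) * t)).
      { rewrite Eid. unfold N in HNt. unfold rho.
        assert ((w1 t ^ 2 + w2 t ^ 2) / d <= K1 * exp (- (2 * m) * t) / d).
        { unfold Rdiv. apply Rmult_le_compat_r; auto. left; apply Rinv_0_lt_compat; auto. }
        unfold d in *. unfold Rdiv in *. lra. }
      assert (He := exp_pos (2 * mu * t)).
      apply Rmult_le_compat_l with (r := exp (2 * mu * t)) in Hr; [|lra].
      assert (Ee : exp (2 * mu * t) * exp (- (2 * m) * t) = exp (- (2 * m - 2 * mu) * t)).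
      { rewrite <- exp_plus. f_equal. ring. }
      assert (EK : K2 * (2 * m - 2 * mu) = K1 / d) by (unfold K2; field; lra).
      rewrite EK.
      assert (E2 : exp (2 * mu * t) * (-2 * mu * rho t + K1 / d * exp (- (2 * m) * t)) =
          -2 * mu * exp (2 * mu * t) * rho t + K1 / d * exp (- (2 * m - 2 * mu) * t)).
      { rewrite <- Ee. ring. }
      rewrite E2 in Hr. lra. }
  assert (HB0 := B_nonneg).
  exists (Rmax (psi 1) (exp (2 * mu) * B)). split.
  { eapply Rle_trans; [|apply Rmax_r]. apply Rmult_le_pos; auto. left; apply exp_pos. }
  intros x Hx.
  assert (Hinv : exp (2 * mu * x) * exp (- (2 * mu) * x) = 1).
  { rewrite <- exp_plus. replace (2 * mu * x + - (2 * mu) * x) with 0 by ring. apply exp_0. }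
  assert (Hep := exp_pos (2 * mu * x)). assert (Hem := exp_pos (- (2 * mu) * x)).
  assert (Key : exp (2 * mu * x) * rho x <= Rmax (psi 1) (exp (2 * mu) * B)).
  { destruct (Rle_or_lt 1 x) as [H1|H1].
    - eapply Rle_trans; [|apply Rmax_l]. eapply Rle_trans; [|apply (Hpsi x H1)].
      unfold psi. assert (0 <= K2 * exp (- (2 * m - 2 * mu) * x)).
      { apply Rmult_le_pos. unfold K2. apply Rmult_le_pos. apply Rmult_le_pos; auto.
        left; apply Rinv_0_lt_compat; auto. left; apply Rinv_0_lt_compat; lra. left; apply exp_pos. }
      lra.
    - eapply Rle_trans; [|apply Rmax_r].
      assert (exp (2 * mu * x) <= exp (2 * mu)) by (apply exp_le'; nra).
      assert (0 <= rho x) by (unfold rho; generalize (pow2_ge_0 (a x)) (pow2_ge_0 (c x)); lra).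
      assert (rho x <= B) by (apply HB; auto).
      apply Rmult_le_compat; lra. }
  apply Rmult_le_compat_r with (r := exp (- (2 * mu) * x)) in Key; [|lra].
  rewrite Rmult_comm, <- Rmult_assoc, (Rmult_comm _ (exp (2 * mu * x))), Hinv, Rmult_1_l in Key.
  exact Key.
Qed.

Lemma decay : exists K, forall x, 0 < x ->
  a x ^ 2 + c x ^ 2 <= K * exp (- (2 * mu) * x) /\ Derive a x ^ 2 + Derive c x ^ 2 <= K * exp (- (2 * mu) * x).
Proof.
  destruct N_bound as [K1 [HK1 HN]].
  destruct rho_bound as [R0 [HR0 HR]].
  exists (R0 + 2 * K1 + 2 * (k ^ 2 + l ^ 2) * R0). intros x Hx.
  assert (Hem := exp_pos (- (2 * mu) * x)).
  assert (Hmm : exp (- (2 * m) * x) <= exp (- (2 * mu) * x)) by (apply exp_le'; nra).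
  assert (Hkl : 0 <= k ^ 2 + l ^ 2) by (generalize (pow2_ge_0 k) (pow2_ge_0 l); lra).
  assert (HRx := HR x Hx). assert (HNx := HN x Hx).
  assert (T1 : 0 <= 2 * K1 * exp (- (2 * mu) * x)) by (apply Rmult_le_pos; lra).
  assert (T2 : 0 <= 2 * (k ^ 2 + l ^ 2) * R0 * exp (- (2 * mu) * x)).
  { apply Rmult_le_pos; [|lra]. apply Rmult_le_pos; lra. }
  assert (Edist : (R0 + 2 * K1 + 2 * (k ^ 2 + l ^ 2) * R0) * exp (- (2 * mu) * x) =
    R0 * exp (- (2 * mu) * x) + 2 * K1 * exp (- (2 * mu) * x) + 2 * (k ^ 2 + l ^ 2) * R0 * exp (- (2 * mu) * x)) by ring.
  rewrite Edist.
  split.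
  - lra.
  - assert (Hd : Derive a x ^ 2 + Derive c x ^ 2 <= 2 * N x + 2 * (k ^ 2 + l ^ 2) * (a x ^ 2 + c x ^ 2)).
    { unfold N, w1, w2.
      assert (H1 := pow2_ge_0 (Derive a x + 2 * (k * a x + l * c x))).
      assert (H2 := pow2_ge_0 (Derive c x + 2 * (k * c x - l * a x))).
      assert (E : 2 * ((Derive a x + k * a x + l * c x) ^ 2 + (Derive c x + k * c x - l * a x) ^ 2)
        + 2 * (k ^ 2 + l ^ 2) * (a x ^ 2 + c x ^ 2) - (Derive a x ^ 2 + Derive c x ^ 2)
        = (Derive a x + 2 * (k * a x + l * c x)) ^ 2 + (Derive c x + 2 * (k * c x - l * a x)) ^ 2) by ring.
      lra. }
    assert (2 * N x <= 2 * K1 * exp (- (2 * mu) * x)).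
    { assert (K1 * exp (- (2 * m) * x) <= K1 * exp (- (2 * mu) * x)) by (apply Rmult_le_compat_l; auto). lra. }
    assert (2 * (k ^ 2 + l ^ 2) * (a x ^ 2 + c x ^ 2) <= 2 * (k ^ 2 + l ^ 2) * R0 * exp (- (2 * mu) * x)).
    { rewrite (Rmult_assoc (2 * (k ^ 2 + l ^ 2)) R0). apply Rmult_le_compat_l; lra. }
    assert (0 <= R0 * exp (- (2 * mu) * x)) by (apply Rmult_le_pos; lra).
    lra.
Qed.

End Core.

Lemma Derive_even (f : R -> R) x : (forall y, f (- y) = f y) -> ex_derive f (- x) ->
  Derive f x = - Derive f (- x).
Proof.
  intros He Hd.
  rewrite (Derive_ext f (fun y => f (- y)) x) by (intro; rewrite He; reflexivity).
  apply is_derive_unique. auto_derive. exact Hd.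
  change (Derive (fun x0 => f x0) (- x)) with (Derive f (- x)). ring.
Qed.

Lemma sqrt_bound u K t mu : 0 <= K -> u ^ 2 <= K * exp (- (2 * mu) * t) ->
  Rabs u <= sqrt K * exp (- mu * t).
Proof.
  intros HK H.
  assert (E : K * exp (- (2 * mu) * t) = (sqrt K * exp (- mu * t)) ^ 2).
  { rewrite Rpow_mult_distr. rewrite pow2_sqrt by auto. f_equal.
    simpl. rewrite Rmult_1_r, <- exp_plus. f_equal; ring. }
  rewrite E in H.
  assert (0 <= sqrt K * exp (- mu * t)) by (apply Rmult_le_pos; [apply sqrt_pos | left; apply exp_pos]).
  rewrite <- (pow2_abs u) in H. set (v := sqrt K * exp (- mu * t)) in *.
  destruct (Rle_or_lt (Rabs u) v) as [Hl|Hl]; auto.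
  assert (v * v < Rabs u * Rabs u) by (apply Rmult_le_0_lt_compat; lra).
  simpl in H. lra.
Qed.

Lemma weighted_from p omega gamma mu K cQ (f : R -> R) : 0 <= K -> 0 < cQ ->
  (forall x, cQ * exp (- sqrt omega * Rabs x) <= Qwg p omega gamma x) ->
  (forall x, x <> 0 -> f x ^ 2 <= K * exp (- (2 * mu) * Rabs x)) ->
  weighted_bounded p omega gamma (mu - sqrt omega) f.
Proof.
  intros HK HcQ HQ Hf. exists (sqrt K / cQ). intros x Hx.
  set (t := Rabs x).
  assert (Hq := HQ x). fold t in Hq.
  assert (He := exp_pos (- sqrt omega * t)).
  assert (HQp : 0 < Qwg p omega gamma x) by (generalize (Rmult_lt_0_compat _ _ HcQ He); lra).
  assert (Hb := sqrt_bound (f x) K t mu HK (Hf x Hx)).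
  unfold Rdiv. rewrite Rabs_mult, Rabs_mult, Rabs_right with (r := exp _) by (left; apply exp_pos).
  rewrite Rabs_right with (r := / _) by (left; apply Rinv_0_lt_compat; auto).
  assert (E1 : exp ((mu - sqrt omega) * t) * exp (- mu * t) = exp (- sqrt omega * t)).
  { rewrite <- exp_plus. f_equal. ring. }
  assert (H1 : exp ((mu - sqrt omega) * t) * Rabs (f x) <= sqrt K * exp (- sqrt omega * t)).
  { rewrite <- E1. assert (Hp := exp_pos ((mu - sqrt omega) * t)).
    apply Rmult_le_compat_l with (r := exp ((mu - sqrt omega) * t)) in Hb; [|lra].
    rewrite Hb. lra. }
  apply Rmult_le_reg_r with (r := Qwg p omega gamma x); auto.
  rewrite Rmult_assoc, Rinv_l, Rmult_1_r by lra.
  apply Rle_trans with (sqrt K * exp (- sqrt omega * t)); auto.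
  replace (sqrt K * / cQ * Qwg p omega gamma x) with (sqrt K * (Qwg p omega gamma x / cQ)) by (field; lra).
  apply Rmult_le_compat_l. apply sqrt_pos.
  apply Rmult_le_reg_l with (r := cQ); auto.
  replace (cQ * (Qwg p omega gamma x / cQ)) with (Qwg p omega gamma x) by (field; lra). exact Hq.
Qed.

Theorem lemma2p21 :
  forall (gamma p omega e : R) (Y1 Y2 : R -> R),
    gamma < 0 -> 5 < p -> gamma ^ 2 / 4 < omega ->
    0 < e ->
    D_even gamma Y1 -> D_even gamma Y2 ->
    (forall x, x <> 0 -> Lplus p omega gamma Y1 x = e * Y2 x) ->
    (forall x, x <> 0 -> Lminus p omega gamma Y2 x = - e * Y1 x) ->
    exists eta : R, 0 < eta /\
      weighted_bounded p omega gamma eta Y1 /\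
      weighted_bounded p omega gamma eta Y2 /\
      weighted_bounded p omega gamma eta (Derive Y1) /\
      weighted_bounded p omega gamma eta (Derive Y2).
Proof.
  intros gamma p omega e Y1 Y2 Hg Hp Hom He HY1 HY2 HL1 HL2.
  assert (Ho : 0 < omega) by (generalize (pow2_ge_0 gamma); lra).
  assert (Hp1 : 1 < p) by lra.
  set (so := sqrt omega).
  assert (Hso : 0 < so) by (apply sqrt_lt_R0; auto).
  assert (Hso2 : so * so = omega) by (apply sqrt_sqrt; lra).
  set (s := sqrt (omega ^ 2 + e ^ 2)).
  assert (Hs0 : 0 <= s) by apply sqrt_pos.
  assert (Hs2 : s * s = omega ^ 2 + e ^ 2) by (apply sqrt_sqrt; generalize (pow2_ge_0 omega) (pow2_ge_0 e); lra).
  assert (Hsw : omega < s).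
  { destruct (Rle_or_lt s omega) as [H|H]; auto.
    assert (s * s <= omega * omega) by (apply Rmult_le_compat; lra).
    assert (0 < e * e) by (apply Rmult_lt_0_compat; lra). simpl in Hs2. lra. }
  set (k := sqrt ((omega + s) / 2)).
  assert (Hk2 : k * k = (omega + s) / 2) by (apply sqrt_sqrt; lra).
  assert (Hk : 0 < k) by (apply sqrt_lt_R0; lra).
  assert (Hkso : so < k).
  { destruct (Rle_or_lt k so) as [H|H]; auto.
    assert (k * k <= so * so) by (apply Rmult_le_compat; lra). lra. }
  set (l := - e / (2 * k)).
  assert (Hkl1 : k ^ 2 - l ^ 2 = omega).
  { unfold l. simpl. replace ((- e / (2 * k)) * ((- e / (2 * k)) * 1)) with (e * e / (4 * (k * k))) by (field; lra).
    rewrite Hk2. apply Rmult_eq_reg_r with (r := 2 * (omega + s)); [|lra].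
    field_simplify; [|lra]. simpl in Hs2. nra. }
  assert (Hkl2 : - 2 * k * l = e) by (unfold l; field; lra).
  set (m := (p - 1) * sqrt omega).
  assert (Hm : so < m) by (unfold m; fold so; nra).
  set (mu := (so + Rmin k m) / 2).
  assert (Hmin1 := Rmin_l k m). assert (Hmin2 := Rmin_r k m).
  assert (Hmin3 : so < Rmin k m) by (apply Rmin_glb_lt; auto).
  destruct (V_bound p omega gamma Hp1 Ho) as [CV [HCV HV]].
  destruct HY1 as [Ev1 [_ [Hd1 [L1 [L1' _]]]]].
  destruct HY2 as [Ev2 [_ [Hd2 [L2 [L2' _]]]]].
  destruct (bounded_f Y1 Hd1 L1 L1') as [B1 HB1].
  destruct (bounded_f Y2 Hd2 L2 L2') as [B2 HB2].
  assert (IBh := IB_plus _ _ (IB_plus _ _ (IB_plus _ _ (L2_IB _ L1) (L2_IB _ L2)) (L2_IB _ L1')) (L2_IB _ L2')).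
  assert (Hpos : forall t, 0 <= Y1 t ^ 2 + Y2 t ^ 2 + Derive Y1 t ^ 2 + Derive Y2 t ^ 2).
  { intro t. generalize (pow2_ge_0 (Y1 t)) (pow2_ge_0 (Y2 t)) (pow2_ge_0 (Derive Y1 t)) (pow2_ge_0 (Derive Y2 t)); lra. }
  assert (Hsmall := IB_small _ Hpos IBh).
  destruct (decay Y1 Y2 (fun t => Rpower (Qwg p omega gamma t) (p - 1)) p k l m CV (B1 + B2) mu
    Hk Hp1 ltac:(lra) ltac:(unfold mu; lra) ltac:(unfold mu; lra) ltac:(unfold mu; lra)
    (fun t Ht => Hd1 t ltac:(lra)) (fun t Ht => Hd2 t ltac:(lra))) as [K HK].
  - intros t Ht. assert (H := HL1 t ltac:(lra)). unfold Lplus, D2 in H. rewrite Hkl1, Hkl2. lra.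
  - intros t Ht. assert (H := HL2 t ltac:(lra)). unfold Lminus, D2 in H. rewrite Hkl1, Hkl2. lra.
  - intros t Ht. apply HV; auto.
  - intros t Ht. generalize (HB1 t Ht) (HB2 t Ht). lra.
  - exact Hsmall.
  - destruct (Q_lower p omega gamma Hp1 Ho) as [cQ [HcQ HQ]].
    assert (HK0 : 0 <= K).
    { destruct (HK 1 ltac:(lra)) as [H1 _].
      assert (H0 : 0 <= Y1 1 ^ 2 + Y2 1 ^ 2) by (generalize (pow2_ge_0 (Y1 1)) (pow2_ge_0 (Y2 1)); lra).
      assert (Hex := exp_pos (- (2 * mu) * 1)).
      destruct (Rle_or_lt 0 K) as [HH|HH]; auto.
      assert (K * exp (- (2 * mu) * 1) < 0) by (apply Rmult_neg_pos; auto). lra. }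
    assert (Gen : forall f : R -> R,
      (forall x, 0 < x -> f x ^ 2 <= K * exp (- (2 * mu) * x)) ->
      (forall x, x < 0 -> f x ^ 2 = f (- x) ^ 2) ->
      weighted_bounded p omega gamma (mu - so) f).
    { intros f Hpos' Hneg. apply (weighted_from p omega gamma mu K cQ f HK0 HcQ HQ).
      intros x Hx. destruct (Rle_or_lt 0 x) as [H0|H0].
      - rewrite Rabs_right by lra. apply Hpos'. lra.
      - rewrite Rabs_left by lra. rewrite Hneg by auto. apply Hpos'. lra. }
    exists (mu - so). split. unfold mu; lra.
    repeat split; apply Gen.
    + intros x Hx. destruct (HK x Hx). generalize (pow2_ge_0 (Y2 x)). lra.
    + intros x Hx. rewrite Ev1. reflexivity.
    + intros x Hx. destruct (HK x Hx). generalize (pow2_ge_0 (Y1 x)). lra.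
    + intros x Hx. rewrite Ev2. reflexivity.
    + intros x Hx. destruct (HK x Hx) as [_ H]. generalize (pow2_ge_0 (Derive Y2 x)). lra.
    + intros x Hx. rewrite (Derive_even Y1 x Ev1). ring.
      destruct (Hd1 (- x) ltac:(lra)); auto.
    + intros x Hx. destruct (HK x Hx) as [_ H]. generalize (pow2_ge_0 (Derive Y1 x)). lra.
    + intros x Hx. rewrite (Derive_even Y2 x Ev2). ring.
      destruct (Hd2 (- x) ltac:(lra)); auto.
Qed.
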